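(* Let $\alpha=(\alpha_\pi)_{\pi\in\mathcal P}$ be monic, singleton inductive weights. Let $A=\bigsqcup_{\mathsf Q\in\mathcal F}A^{\mathsf Q}$ be a multi-faced algebra in which each face $A^{\mathsf Q}$ is unital with unit $1^{\mathsf Q}$, and let $\varphi:A\to\mathbb C$ be linear with $\varphi(1^{\mathsf Q})=1$ for all $\mathsf Q$ and $\varphi$ vanishing on the two-sided ideal generated by $\{1^{\mathsf q}-1^{\mathsf Q}:\mathsf q,\mathsf Q\in\mathcal F\}$. Then $\log_\alpha\hat\varphi(a_1\otimes\cdots\otimes a_n)=0$ whenever $n>1$, $a_\ell\in A^{\mathbf f(\ell)}$ for some $\mathbf f\in\mathcal F^n$, and $a_s=1^{\mathbf f(s)}$ for some $s\in[n]$.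
   Context: Fix a finite set $\mathcal F$ of faces. Algebras are complex associative, not necessarily unital. A multi-faced algebra $A=\bigsqcup_{\mathsf Q}A^{\mathsf Q}$ is an algebra with subalgebras $A^{\mathsf Q}$ such that the canonical homomorphism from their free product to $A$ is an isomorphism. For $\mathbf f\in\mathcal F^n$, $\mathcal P(\mathbf f)$ is the set of set partitions of $[n]$ whose elements $\ell$ carry face $\mathbf f(\ell)$, $\mathcal P=\bigcup_{\mathbf f}\mathcal P(\mathbf f)$; partitions of a subset of $[n]$ (with restricted faces) are identified with elements of $\mathcal P$ via the order-preserving bijection. Weights $\alpha=(\alpha_\pi)_{\pi\in\mathcal P}\subset\mathbb C$ are monic if $\alpha_\pi=1$ for every one-block partition, and singleton inductive if $\alpha_\pi=\alpha_{\pi\setminus\{s\}}$ whenever $\{s\}$ is a singleton block of $\pi$ (where $\pi\setminus\{s\}$ is the partition of $[n]\setminus\{s\}$ obtained by removing that block). Let $V=\bigoplus_{\mathsf Q}A^{\mathsf Q}$ (a vector space graded by faces) and $T_0(V)=\bigoplus_{m\ge1}V^{\otimes m}$ the non-unital tensor algebra; $\mu:T_0(V)\to A$ is the canonical homomorphism and $\hat\varphi=\varphi\circ\mu$. For a linear $\psi$ on $T_0(V)$ define $\exp_\alpha(\psi)(x_1\otimes\cdots\otimes x_m)=\sum_{\pi\in\mathcal P(\mathbf g)}\alpha_\pi\prod_{\beta\in\pi}\psi(x_\beta)$ for $x_i\in V^{\mathbf g(i)}$, where $x_\beta$ is the tensor product of the $x_i$, $i\in\beta$, in increasing order; $\exp_\alpha$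 is a bijection on linear functionals on $T_0(V)$ and $\log_\alpha$ denotes its inverse. *)

(* Defs.v *)
From HB Require Import structures.
From mathcomp Require Import all_boot all_order all_algebra.
From mathcomp Require Import reals complex.

Set Implicit Arguments.
Unset Strict Implicit.
Unset Printing Implicit Defensive.

Import GRing.Theory.
Local Open Scope ring_scope.

Record nuAlg (K : pzRingType) := NuAlg {
  nua_car :> lmodType K;
  nua_mul : nua_car -> nua_car -> nua_car;
  nua_mulA : forall x y z, nua_mul x (nua_mul y z) = nua_mul (nua_mul x y) z;
  nua_mulDl : forall x y z, nua_mul (x + y) z = nua_mul x z + nua_mul y z;
  nua_mulDr : forall x y z, nua_mul x (y + z) = nua_mul x y + nua_mul x z;
  nua_mulZl : forall (a : K) x y, nua_mul (a *: x) y = a *: nua_mul x y;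
  nua_mulZr : forall (a : K) x y, nua_mul x (a *: y) = a *: nua_mul x y
}.

Section NuAlgDefs.
Variable K : pzRingType.

Definition is_subspace (A : nuAlg K) (S : A -> Prop) : Prop :=
  S 0 /\ (forall x y, S x -> S y -> S (x + y)) /\
  (forall (a : K) x, S x -> S (a *: x)).

Definition is_subalg (A : nuAlg K) (S : A -> Prop) : Prop :=
  is_subspace S /\ (forall x y, S x -> S y -> S (nua_mul x y)).

Definition is_ideal (A : nuAlg K) (S : A -> Prop) : Prop :=
  is_subspace S /\ (forall x y, S x -> S (nua_mul y x) /\ S (nua_mul x y)).

Definition ideal_gen (A : nuAlg K) (G : A -> Prop) (x : A) : Prop :=
  forall I : A -> Prop, is_ideal I -> (forall g, G g -> I g) -> I x.

Definition alg_hom_on (A B : nuAlg K) (S : A -> Prop) (h : A -> B) : Prop :=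
  (forall x y, S x -> S y -> h (x + y) = h x + h y) /\
  (forall (a : K) x, S x -> h (a *: x) = a *: h x) /\
  (forall x y, S x -> S y -> h (nua_mul x y) = nua_mul (h x) (h y)).

(* Multi-faced algebra: the A^Q are subalgebras and the canonical
   homomorphism from their free product to A is an isomorphism, i.e.
   (A, inclusions A^Q -> A) satisfies the universal property of the
   free product (= coproduct in the category of algebras). *)
Definition multifaced (F : finType) (A : nuAlg K) (Af : F -> A -> Prop) : Prop :=
  (forall Q, is_subalg (Af Q)) /\
  forall (B : nuAlg K) (h : F -> A -> B),
    (forall Q, alg_hom_on (Af Q) (h Q)) ->
    (exists g : A -> B, alg_hom_on (fun _ => True) g /\
        forall Q x, Af Q x -> g x = h Q x) /\
    (forall g1 g2 : A -> B,
        alg_hom_on (fun _ => True) g1 -> alg_hom_on (fun _ => True) g2 ->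
        (forall Q x, Af Q x -> g1 x = h Q x) ->
        (forall Q x, Af Q x -> g2 x = h Q x) ->
        forall x, g1 x = g2 x).
End NuAlgDefs.

(* Weights alpha : for pi in P(f), f : 'I_n -> F, the partition pi is a
   set partition of 'I_n (finset's  partition pi [set: 'I_n]).          *)
Definition weights (F : finType) (C : Type) :=
  forall n : nat, ('I_n -> F) -> {set {set 'I_n}} -> C.

Definition monic_weights (F : finType) (C : pzRingType) (al : weights F C) :=
  forall n (f : 'I_n -> F), (0 < n)%N -> al n f [set [set: 'I_n]] = 1.

(* pi \ {s}, transported to 'I_m along the order-preserving bijection
   lift s : 'I_m -> [m+1] \ {s} *)
Definition remove_singleton m (s : 'I_m.+1) (pi : {set {set 'I_m.+1}})
  : {set {set 'I_m}} :=
  [set lift s @^-1: B | B : {set 'I_m.+1} in pi :\ [set s]].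

Definition singleton_inductive (F : finType) (C : Type) (al : weights F C) :=
  forall m (f : 'I_m.+1 -> F) (pi : {set {set 'I_m.+1}}) (s : 'I_m.+1),
    partition pi [set: 'I_m.+1] -> [set s] \in pi ->
    al m.+1 f pi = al m (f \o lift s) (remove_singleton s pi).

(* Elementary tensors x_1 (x) ... (x) x_m of homogeneous elements of
   V = (+)_Q A^Q are represented as sequences of pairs (face, element). *)
Section Tensor.
Variables (F : finType) (C : pzRingType) (A : nuAlg C).

Definition exp_alpha (al : weights F C) (psi : seq (F * A) -> C)
    (s : seq (F * A)) : C :=
  \sum_(pi : {set {set 'I_(size s)}} | partition pi [set: 'I_(size s)])
     al (size s) (fun i => (tnth (in_tuple s) i).1) pi *
     \prod_(B in pi) psi [seq tnth (in_tuple s) i | i <- enum B].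

Definition phi_hat (phi : A -> C) (s : seq (F * A)) : C :=
  match s with
  | [::] => 0
  | x :: r => phi (foldl (@nua_mul C A) x.2 (map snd r))
  end.

Definition homogeneous (Af : F -> A -> Prop) (s : seq (F * A)) : Prop :=
  forall x, x \in s -> Af x.1 x.2.
End Tensor.

(* Main.v *)
Require Import Defs.
From HB Require Import structures.
From mathcomp Require Import all_boot all_order all_algebra.
From mathcomp Require Import reals complex.
From Stdlib Require Import FunctionalExtensionality.
From mathcomp Require Import zify.
Import GRing.Theory.
Local Open Scope ring_scope.

Section Part.
Variable T : finType.
Lemma partP (P : {set {set T}}) :
  partition P [set: T] <->
  [/\ set0 \notin P, (forall x, exists2 B, B \in P & x \in B) &
      (forall B C x, B \in P -> C \in P -> x \in B -> x \in C -> B = C)].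
Proof.
split.
- case/and3P => /eqP cov /trivIsetP tri n0; split => //.
  + move=> x; have : x \in cover P by rewrite cov inE.
    by case/bigcupP => B hB xB; exists B.
  + move=> B C x hB hC xB xC; apply/eqP; apply/negPn/negP => neq.
    by have := disjointFr (tri B C hB hC neq) xB; rewrite xC.
- case=> n0 cov uni; apply/and3P; split => //.
  + apply/eqP/setP => x; rewrite inE; apply/bigcupP; case: (cov x) => B hB xB; by exists B.
  + apply/trivIsetP => B C hB hC neq; rewrite -setI_eq0; apply/eqP/setP => x; rewrite !inE.
    apply/negbTE/negP => /andP [xB xC]; by rewrite (uni B C x hB hC xB xC) eqxx in neq.
Qed.

Lemma part_setT (x : T) : partition [set [set: T]] [set: T].
Proof.
apply/partP; split.
- rewrite inE eq_sym; apply/negP => /eqP/setP/(_ x); by rewrite !inE.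
- move=> y; exists [set: T]; by rewrite ?inE.
- move=> B C y; rewrite !inE => /eqP -> /eqP -> //.
Qed.

Lemma part_full (P : {set {set T}}) : partition P [set: T] -> [set: T] \in P ->
  P = [set [set: T]].
Proof.
case/partP => n0 cov uni hT; apply/setP => C; rewrite inE; apply/idP/eqP => [hC|->//].
have : C != set0 by apply/eqP => e; move: n0; rewrite -e hC.
case/set0Pn => c cC; exact: (uni C _ c hC hT cC (in_setT c)).
Qed.
End Part.

Section Lift.
Variables (m : nat) (k : 'I_m.+1).
Definition ins (pi : {set {set 'I_m}}) : {set {set 'I_m.+1}} :=
  [set k] |: [set lift k @: (B : {set 'I_m}) | B in pi].

Lemma k_notin_img (B : {set 'I_m}) : k \notin lift k @: B.
Proof. apply/imsetP => [[j _ /eqP]]; by rewrite (negbTE (neq_lift _ _)). Qed.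

Lemma set1_notin_img (pi : {set {set 'I_m}}) : [set k] \notin [set lift k @: (B : {set 'I_m}) | B in pi].
Proof. apply/imsetP => [[B _ e]]; have := k_notin_img B; by rewrite -e set11. Qed.

Lemma mem_img_lift (B : {set 'I_m}) j : (lift k j \in lift k @: B) = (j \in B).
Proof. exact: (mem_imset _ _ (@lift_inj _ k)). Qed.

Lemma ins_part pi : partition pi [set: 'I_m] -> partition (ins pi) [set: 'I_m.+1].
Proof.
case/partP => n0 cov uni; apply/partP; split.
- rewrite !inE negb_or; apply/andP; split.
  + apply/negP => /eqP/setP/(_ k); by rewrite !inE eqxx.
  + apply/imsetP => [[B hB /esym/eqP]]; rewrite imset_eq0 => /eqP e; by rewrite -e hB in n0.
- move=> x; case: (unliftP k x) => [j ->|->].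
  + case: (cov j) => B hB jB; exists (lift k @: B); last by rewrite mem_img_lift.
    by rewrite !inE imset_f ?orbT.
  + by exists [set k]; rewrite !inE ?eqxx.
- move=> B C x; rewrite !inE => /orP [/eqP -> | /imsetP [B' hB' ->]] /orP [/eqP -> | /imsetP [C' hC' ->]] //.
  + rewrite inE => /eqP ->; by rewrite (negbTE (k_notin_img _)).
  + move=> xB; rewrite inE => /eqP e; by rewrite e (negbTE (k_notin_img _)) in xB.
  + case/imsetP => j jB -> ; rewrite mem_img_lift => jC.
    by rewrite (uni B' C' j hB' hC' jB jC).
Qed.

Lemma ins_part_inv pi : partition (ins pi) [set: 'I_m.+1] -> partition pi [set: 'I_m].
Proof.
case/partP => n0 cov uni; apply/partP; split.
- apply: contra n0 => h; rewrite !inE; apply/orP; right; apply/imsetP; exists set0 => //.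
  by rewrite imset0.
- move=> j; case: (cov (lift k j)) => B hB jB.
  move: hB; rewrite !inE => /orP [/eqP eB | /imsetP [B' hB' eB]].
  + by move: jB; rewrite eB inE eq_sym (negbTE (neq_lift _ _)).
  + by exists B' => //; rewrite eB mem_img_lift in jB.
- move=> B C j hB hC jB jC; apply: (imset_inj (@lift_inj _ k)).
  apply: (uni _ _ (lift k j)); rewrite ?mem_img_lift // !inE imset_f ?orbT //.
Qed.

Lemma preim_img (B : {set 'I_m}) : lift k @^-1: (lift k @: B) = B.
Proof. by apply/setP => j; rewrite inE mem_img_lift. Qed.

Lemma img_preim (D : {set 'I_m.+1}) : k \notin D -> lift k @: (lift k @^-1: D) = D.
Proof.
move=> kD; apply/setP=> x; case: (unliftP k x) => [j ->|->].
- by rewrite mem_img_lift inE.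
- by rewrite (negbTE (k_notin_img _)) (negbTE kD).
Qed.

Lemma rem_ins pi : remove_singleton k (ins pi) = pi.
Proof.
rewrite /remove_singleton /ins setU1K ?set1_notin_img //.
apply/setP=> B; apply/imsetP/idP => [[C /imsetP [C' hC' ->] ->]|hB].
- by rewrite preim_img.
- by exists (lift k @: B); rewrite ?preim_img // imset_f.
Qed.

Lemma ins_rem pi : partition pi [set: 'I_m.+1] -> [set k] \in pi ->
  ins (remove_singleton k pi) = pi.
Proof.
move=> /partP [n0 cov uni] hk.
apply/setP => B; rewrite /ins /remove_singleton !inE; apply/idP/idP.
- case/orP => [/eqP -> // | /imsetP [C /imsetP [D hD ->] ->]].
  move: hD; rewrite !inE => /andP [nD hD]; rewrite img_preim //.
  apply/negP => kD; by rewrite (uni D [set k] k hD hk kD (set11 k)) eqxx in nD.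
- move=> hB; case: (eqVneq B [set k]) => [-> | nB]; first by rewrite ?eqxx.
  apply/orP; right; apply/imsetP; exists (lift k @^-1: B).
  + by apply/imsetP; exists B => //; rewrite !inE nB hB.
  + rewrite img_preim //; apply/negP => kB.
    by rewrite (uni B [set k] k hB hk kB (set11 k)) eqxx in nB.
Qed.

Lemma sorted_enum n (B : {set 'I_n}) :
  sorted (fun i j : 'I_n => (i < j)%N) (enum B).
Proof.
rewrite /enum_mem; apply: sorted_filter; first by move=> a b c; apply: ltn_trans.
rewrite -enumT; have := iota_ltn_sorted 0 n; by rewrite -val_enum_ord sorted_map.
Qed.

Lemma enum_img_lift (B : {set 'I_m}) : enum (lift k @: B) = map (lift k) (enum B).
Proof.
apply: (@irr_sorted_eq _ (fun i j : 'I_m.+1 => (i < j)%N)).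
- by move=> a b c; apply: ltn_trans.
- by move=> a; rewrite ltnn.
- exact: sorted_enum.
- apply: (homo_sorted (e := fun i j : 'I_m => (i < j)%N)); last exact: sorted_enum.
  move=> a b /= ab; rewrite /bump; case: (leqP k a) => h1; case: (leqP k b) => h2 /=; lia.
- move=> x; rewrite mem_enum; apply/imsetP/mapP => [[j jB ->]|[j jB ->]]; exists j => //;
  by rewrite ?mem_enum in jB *.
Qed.
End Lift.
Arguments ins {m} k pi.
Arguments rem_ins {m} k pi.

Section Alg.
Variables (K : pzRingType) (A : nuAlg K).
Local Notation mul := (@nua_mul K A).

Lemma mulNl x y : mul (- x) y = - mul x y.
Proof. by rewrite -scaleN1r nua_mulZl scaleN1r. Qed.
Lemma mulNr x y : mul x (- y) = - mul x y.
Proof. by rewrite -scaleN1r nua_mulZr scaleN1r. Qed.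
Lemma mulBl x y z : mul (x - y) z = mul x z - mul y z.
Proof. by rewrite nua_mulDl mulNl. Qed.
Lemma mulBr x y z : mul x (y - z) = mul x y - mul x z.
Proof. by rewrite nua_mulDr mulNr. Qed.
Lemma foldlB u v l : foldl mul (u - v) l = foldl mul u l - foldl mul v l.
Proof. by elim: l u v => [|a l IH] u v //=; rewrite mulBl IH. Qed.
Lemma foldl_ideal (I : A -> Prop) u l : is_ideal I -> I u -> I (foldl mul u l).
Proof.
move=> [_ hI]; elim: l u => [|a l IH] u //= hu; apply: IH; exact: (hI u a hu).2.
Qed.
End Alg.

Section PhiAlg.
Variables (F : finType) (K : pzRingType) (A : nuAlg K) (Af : F -> A -> Prop)
  (one : F -> A) (phi : A -> K).
Local Notation mul := (@nua_mul K A).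
Hypothesis hunit : forall Q a, Af Q a -> mul (one Q) a = a /\ mul a (one Q) = a.
Hypothesis hlin : forall (c : K) x y, phi (c *: x + y) = c * phi x + phi y.
Hypothesis hid : forall x, ideal_gen (fun g => exists q Q, g = one q - one Q) x -> phi x = 0.

Lemma phiB x y : phi (x - y) = phi x - phi y.
Proof. by rewrite addrC -scaleN1r hlin mulN1r addrC. Qed.

Lemma phi_ideal u v :
  (forall I, is_ideal I -> (forall g, (exists q Q, g = one q - one Q) -> I g) -> I (u - v)) ->
  phi u = phi v.
Proof. move=> h; apply/eqP; rewrite -subr_eq0 -phiB; apply/eqP/hid => I hI hG; exact: h. Qed.

Lemma last_unit (l : seq (F * A)) p a : mul a (one p.1) = a ->
  (forall x, x \in l -> Af x.1 x.2) ->
  mul (foldl mul a (map snd l)) (one (last p l).1) = foldl mul a (map snd l).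
Proof.
elim: l p a => [|p' l IH] p a //= ha hl; apply: IH.
- by rewrite -nua_mulA (proj2 (hunit _ _ (hl p' (mem_head _ _)))).
- by move=> y yl; apply: hl; rewrite inE yl orbT.
Qed.

Lemma phi_hat_unit l1 p l2 : p.2 = one p.1 -> l1 ++ l2 != [::] ->
  homogeneous Af (l1 ++ p :: l2) ->
  phi_hat phi (l1 ++ p :: l2) = phi_hat phi (l1 ++ l2).
Proof.
move=> hp.
case: l1 => [|p0 l1] /= ne hom.
- case: l2 ne hom => [|[q b] l2] //= _ hom.
  have hb : Af q b by apply: (hom (q, b)); rewrite !inE eqxx orbT.
  have -> : foldl mul b (map snd l2) = foldl mul (mul (one q) b) (map snd l2)
    by rewrite (proj1 (hunit _ _ hb)).
  apply: phi_ideal => I hI hG; rewrite -foldlB -mulBl hp; apply: foldl_ideal => //.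
  apply: ((proj2 hI) _ b _).2; apply: hG; by exists p.1, q.
- rewrite !map_cat !foldl_cat /=.
  set X := foldl mul p0.2 (map snd l1).
  have hX : mul X (one (last p0 l1).1) = X.
    apply: last_unit; first exact: (proj2 (hunit _ _ (hom p0 (mem_head _ _)))).
    by move=> y yl; apply: hom; rewrite inE mem_cat yl orbT.
  rewrite -[in RHS]hX.
  apply: phi_ideal => I hI hG; rewrite -foldlB -mulBr hp; apply: foldl_ideal => //.
  apply: ((proj2 hI) _ X _).1; apply: hG; by exists p.1, (last p0 l1).1.
Qed.
End PhiAlg.

Section Sums.
Variables (F : finType) (C : comPzRingType) (X : Type) (al : weights F C)
  (psi : seq (F * X) -> C).

Definition E n (g : 'I_n -> F * X) : C :=
  \sum_(pi : {set {set 'I_n}} | partition pi [set: 'I_n])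
     al n (fun i => (g i).1) pi * \prod_(B in pi) psi [seq g i | i <- enum B].
Arguments E [n] g.

Lemma E_cast n1 n2 (e : n1 = n2) (g1 : 'I_n1 -> F * X) g2 :
  (forall i, g1 i = g2 (cast_ord e i)) -> E g1 = E g2.
Proof.
case: n2 / e g2 => g2 h.
have -> : g1 = g2 by apply: functional_extensionality => i; rewrite h cast_ord_id.
by [].
Qed.

Lemma enum_ord1 : enum 'I_1 = [:: ord0].
Proof.
have := val_enum_ord 1; case: (enum 'I_1) => [|a [|b l]] //= [e].
by congr [:: _]; apply: val_inj; rewrite /= e.
Qed.

Lemma E1 (hm : monic_weights al) (g : 'I_1 -> F * X) : E g = psi [:: g ord0].
Proof.
rewrite /E (bigD1 [set [set: 'I_1]]) /=; last exact: part_setT ord0.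
rewrite [Y in _ + Y]big1 ?addr0; last first.
  move=> pi /andP [hp hne]; exfalso; move/eqP: hne; apply.
  apply: part_full => //; case/partP: hp => n0 cov _.
  case: (cov ord0) => B hB _.
  have -> : [set: 'I_1] = B; last by [].
  have : B != set0 by apply/eqP => e; move: n0; rewrite -e hB.
  case/set0Pn => c cB; apply/setP => j; rewrite inE.
  by have -> : j = c by rewrite (ord1 j) (ord1 c).
by rewrite hm // big_set1 enum_setT -enumT enum_ord1 /= mul1r.
Qed.

Lemma sum_single (hs : singleton_inductive al) m (k : 'I_m.+1) (g : 'I_m.+1 -> F * X) :
  \sum_(pi : {set {set 'I_m.+1}} | partition pi [set: 'I_m.+1] && ([set k] \in pi))
     al m.+1 (fun i => (g i).1) pi * \prod_(B in pi) psi [seq g i | i <- enum B]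
  = psi [:: g k] * E (fun j => g (lift k j)).
Proof.
rewrite (reindex_onto (ins k) (remove_singleton k)) /=; last first.
  by move=> pi /andP [hp hk]; exact: ins_rem.
rewrite /E big_distrr /=; apply: eq_big => pi.
- apply/andP/idP => [[/andP [h _] _] | h]; first exact: (@ins_part_inv m k pi h).
  by rewrite (@ins_part m k pi h) !inE eqxx rem_ins eqxx.
- move=> /andP [/andP [hp0 hk] _].
  rewrite (hs _ _ _ k hp0 hk).
  rewrite rem_ins /ins big_setU1 /= ?set1_notin_img // enum_set1 /=.
  rewrite big_imset /=; last by move=> B D _ _; apply: imset_inj; exact: lift_inj.
  rewrite mulrCA; congr (_ * (_ * _)); apply: eq_bigr => B _.
  by rewrite enum_img_lift -map_comp.
Qed.

Lemma sum_nonsingle m (k : 'I_m.+1) (g : 'I_m.+1 -> F * X) : (0 < m)%N ->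
  (forall B : {set 'I_m.+1}, k \in B -> (1 < #|B|)%N -> (#|B| < m.+1)%N ->
      psi [seq g i | i <- enum B] = 0) ->
  \sum_(pi : {set {set 'I_m.+1}} | partition pi [set: 'I_m.+1] && ([set k] \notin pi))
     al m.+1 (fun i => (g i).1) pi * \prod_(B in pi) psi [seq g i | i <- enum B]
  = al m.+1 (fun i => (g i).1) [set [set: 'I_m.+1]] *
    psi [seq g i | i <- enum [set: 'I_m.+1]].
Proof.
move=> hm IHB.
rewrite (bigD1 [set [set: 'I_m.+1]]) /=; last first.
  rewrite part_setT //= inE; apply/negP => /eqP e.
  have := congr1 (fun Y : {set 'I_m.+1} => #|Y|) e; rewrite /= cards1 cardsT card_ord; lia.
rewrite big_set1 big1 ?addr0 // => pi /andP [/andP [hp hk] hne].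
have hp' := hp; case/partP: hp' => n0 cov uni.
case: (cov k) => B hB kB.
rewrite (bigD1 B) //= IHB ?mul0r ?mulr0 //.
- have : [set k] \proper B.
    rewrite properEneq sub1set kB andbT; apply/eqP => e; by rewrite e hB in hk.
  by move/proper_card; rewrite cards1.
- have : B \proper [set: 'I_m.+1].
    rewrite properT; apply/eqP => e; move/eqP: hne; apply; apply: part_full => //.
    by rewrite -e.
  by move/proper_card; rewrite cardsT card_ord.
Qed.
End Sums.

Lemma take_drop_lift (T : Type) (x0 : T) m (t : seq T) (k : 'I_m.+1) :
  size t = m.+1 ->
  [seq nth x0 t (lift k j) | j <- enum 'I_m] = take k t ++ drop k.+1 t.
Proof.
move=> st; have hk : (k < size t)%N by rewrite st ltn_ord.
apply: (@eq_from_nth _ x0).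
- rewrite size_map size_enum_ord size_cat size_take size_drop hk st.
  have := ltn_ord k; lia.
- move=> j; rewrite size_map size_enum_ord => jm.
  rewrite (nth_map (Ordinal jm)) ?size_enum_ord //.
  have -> : nth (Ordinal jm) (enum 'I_m) j = Ordinal jm.
    by apply: val_inj; rewrite /= nth_enum_ord.
  rewrite /= /bump nth_cat size_take hk.
  case: (ltnP j k) => hj.
  + by rewrite nth_take // leqNgt hj.
  + rewrite nth_drop; congr (nth _ _ _); rewrite /=; lia.
Qed.

Theorem lemma9p6 (R : realType) (F : finType) (al : weights F R[i])
  (A : nuAlg R[i]) (Af : F -> A -> Prop) (one : F -> A) (phi : A -> R[i]) :
  monic_weights al -> singleton_inductive al ->
  multifaced Af ->
  (forall Q, Af Q (one Q)) ->
  (forall Q a, Af Q a -> nua_mul (one Q) a = a /\ nua_mul a (one Q) = a) ->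
  (forall (c : R[i]) x y, phi (c *: x + y) = c * phi x + phi y) ->
  (forall Q, phi (one Q) = 1) ->
  (forall x, ideal_gen (fun g => exists q Q, g = one q - one Q) x -> phi x = 0) ->
  (* psi = log_alpha(hat phi): the (unique) functional with exp_alpha psi = hat phi *)
  forall psi : seq (F * A) -> R[i],
    (forall s, (0 < size s)%N -> homogeneous Af s ->
       exp_alpha al psi s = phi_hat phi s) ->
  forall s : seq (F * A), (1 < size s)%N -> homogeneous Af s ->
    (exists2 x, x \in s & x.2 = one x.1) ->
    psi s = 0.
Proof.
move=> hm hs _ hone hunit hlin hphi1 hid psi hpsi.
pose EE := E F R[i] A al psi.
have E_seq : forall n (g : 'I_n -> F * A),
    EE n g = exp_alpha al psi [seq g i | i <- enum 'I_n].
  move=> n g; change (EE n g = EE _ (tnth (in_tuple [seq g i | i <- enum 'I_n]))).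
  have e : n = size [seq g i | i <- enum 'I_n] by rewrite size_map size_enum_ord.
  apply: (E_cast _ _ _ _ _ _ _ e) => i.
  rewrite (tnth_nth (g i)) /= (nth_map i) ?size_enum_ord //; congr g.
  by apply: val_inj; rewrite /= nth_enum_ord.
have main : forall N s, (size s <= N)%N -> (1 < size s)%N -> homogeneous Af s ->
    (exists2 x, x \in s & x.2 = one x.1) -> psi s = 0.
  elim=> [|N IH] [|x0 r] //.
  move=> hN h1 hom [x xs hx].
  pose s := x0 :: r.
  pose m := size r.
  pose g : 'I_m.+1 -> F * A := tnth (in_tuple s).
  have hk : (index x s < size s)%N by rewrite index_mem.
  pose k : 'I_m.+1 := Ordinal hk.
  have gk : g k = x by rewrite /g (tnth_nth x) /= nth_index.
  have hm0 : (0 < m)%N by [].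
  have hE := hpsi s erefl hom.
  change (EE m.+1 g = phi_hat phi s) in hE.
  rewrite /EE /E (bigID (fun pi : {set {set 'I_m.+1}} => [set k] \in pi)) /= in hE.
  rewrite (sum_single _ _ _ _ _ hs) (sum_nonsingle _ _ _ _ _ _ _ _ hm0) in hE; last first.
    move=> B kB h1B h2B; apply: (IH) => //.
    - by rewrite size_map -cardE; rewrite -ltnS (leq_trans h2B hN).
    - by rewrite size_map -cardE.
    - by move=> y /mapP [i _ ->]; apply: hom; exact: mem_tnth.
    - by exists (g k); [apply: map_f; rewrite mem_enum | rewrite gk].
  have h1k : psi [:: g k] = 1.
    have := hpsi [:: g k] erefl.
    have hh : homogeneous Af [:: g k].
      by move=> y; rewrite inE => /eqP ->; apply: hom; exact: mem_tnth.
    move=> /(_ hh).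
    change (EE 1 (tnth (in_tuple [:: g k])) = phi_hat phi [:: g k] -> psi [:: g k] = 1).
    rewrite /EE E1 //= => ->; by rewrite gk hx hphi1.
  set s' := [seq g (lift k j) | j <- enum 'I_m].
  have hs' : EE m (fun j => g (lift k j)) = phi_hat phi s'.
    rewrite E_seq; apply: hpsi; first by rewrite size_map size_enum_ord.
    by move=> y /mapP [i _ ->]; apply: hom; exact: mem_tnth.
  have es' : s' = take k s ++ drop k.+1 s.
    rewrite -(take_drop_lift _ x0 _ s k (erefl : size s = m.+1)) /s'.
    by apply: eq_map => j; rewrite /g (tnth_nth x0).
  have es : s = take k s ++ x :: drop k.+1 s.
    by rewrite -[in LHS](cat_take_drop k s) (drop_nth x0 hk) /= nth_index.
  have hphs : phi_hat phi s = phi_hat phi s'.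
    rewrite {1}es es'; apply: (phi_hat_unit _ _ _ _ _ _ hunit hlin hid) => //.
    - by rewrite -es' /s' -size_eq0 size_map size_enum_ord -lt0n.
    - by rewrite -es.
  have hall : al m.+1 (fun i => (g i).1) [set [set: 'I_m.+1]] = 1 by rewrite hm.
  have hss : [seq g i | i <- enum [set: 'I_m.+1]] = s.
    by rewrite enum_setT -enumT /g map_tnth_enum.
  move: hE; rewrite h1k -/EE hs' hall hss mul1r mul1r => hE.
  have hE' : phi_hat phi s' + psi s = phi_hat phi s := hE.
  move: hE'; rewrite hphs => /eqP.
  by rewrite -subr_eq0 addrC addKr => /eqP.
move=> s h1 hom hx; exact: (main (size s) s (leqnn _) h1 hom hx).
Qed.
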